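(* Consider the SBCM on the path graph $P_n$ ($n\ge1$) with nodes $1,\ldots,n+2$ in a path, zealots at nodes $1$ and $n+2$ with opinions $-(n+1)/2$ and $(n+1)/2$, and persuadable nodes $2,\ldots,n+1$; let $\bar{\mathbf{x}}$ be the harmonic state $\bar x_k=k-\frac{n+3}{2}$. Let $y$ be the unique negative real solution of $e^{y-2}=y^2/4$. Then: (1) If $\delta\in[0,1]$, there exists $\gamma_c>0$ such that $\bar{\mathbf{x}}$ is linearly stable for all $\gamma\in[0,\gamma_c)$ and linearly unstable for all $\gamma>\gamma_c$; moreover $\gamma_c=1$ when $\delta=1$. (2) If $\delta\in(1,1-y)$, there exist $\gamma_1,\gamma_2>0$ such that $\bar{\mathbf{x}}$ is linearly unstable if and only if $\gamma\in(\gamma_1,\gamma_2)$, and is linearly stable if $\gamma<\gamma_1$ or $\gamma>\gamma_2$. (3) If $\delta>1-y$, then $\bar{\mathbf{x}}$ is linearly stable for all $\gamma>0$.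
   Context: The SBCM with parameters $\gamma,\delta\ge0$ on a graph with zealots $\mathcal{Z}$ and persuadable nodes $\mathcal{P}$: with $w(x_i,x_j)=\frac{1}{1+e^{\gamma(x_i-x_j)^2-\gamma\delta}}$ for adjacent $i\sim j$ and $0$ otherwise, the dynamics are $\frac{dx_i}{dt}=f_i(\mathbf{x})=\frac{\sum_j w(x_i,x_j)(x_j-x_i)}{\sum_j w(x_i,x_j)}$ for $i\in\mathcal{P}$ and $\frac{dx_i}{dt}=0$ for zealots. The state $\bar{\mathbf{x}}$ is a steady state for every $\gamma$. A steady state is linearly stable if all eigenvalues of $\mathbf{J}_{\mathcal{P}}=(\partial f_i/\partial x_j)_{i,j\in\mathcal{P}}$ at it are strictly negative, and linearly unstable if $\mathbf{J}_{\mathcal{P}}$ has a strictly positive eigenvalue. *)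

(* Defs.v *)
From HB Require Import structures.
From mathcomp Require Import all_boot all_order all_algebra.
From mathcomp Require Import all_classical all_reals all_analysis.
From mathcomp Require Import complex.
Set Implicit Arguments. Unset Strict Implicit. Unset Printing Implicit Defensive.
Import Order.TTheory GRing.Theory Num.Theory.
Local Open Scope ring_scope.

Definition sbcm_w {R : realType} (gamma delta xi xj : R) : R :=
  1 / (1 + expR (gamma * (xi - xj) ^+ 2 - gamma * delta)).

Definition sbcm_f {R : realType} (m : nat) (adj : rel 'I_m) (gamma delta : R)
    (x : 'I_m -> R) (i : 'I_m) : R :=
  (\sum_(j < m) (if adj i j then sbcm_w gamma delta (x i) (x j) else 0) * (x j - x i))
  / (\sum_(j < m) (if adj i j then sbcm_w gamma delta (x i) (x j) else 0)).

(* Path graph on nodes 0,...,n+1 (paper's nodes 1,...,n+2) *)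
Definition path_adj (n : nat) : rel 'I_n.+2 :=
  fun i j => (i.+1 == j :> nat) || (j.+1 == i :> nat).

(* persuadable node p (0-indexed in 'I_n) is node p+1 (paper's node p+2) *)
Definition pers (n : nat) (p : 'I_n) : 'I_n.+2 := lift ord0 (widen_ord (leqnSn n) p).

(* harmonic state: paper's node k has value k - (n+3)/2; our 0-indexed node k is paper node k+1 *)
Definition harmonic_state {R : realType} (n : nat) (k : 'I_n.+2) : R :=
  (k.+1)%:R - (n%:R + 3) / 2.

Definition jacP {R : realType} (n : nat) (gamma delta : R) (xb : 'I_n.+2 -> R)
  : 'M[R]_n :=
  \matrix_(i < n, j < n)
    derive1 (fun t : R => sbcm_f (@path_adj n) gamma delta
        (fun k => xb k + (if k == pers j then t else 0)) (pers i)) 0.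

Definition eigenvalues_of {R : realType} (n : nat) (J : 'M[R]_n) : pred R[i] :=
  fun z => root (map_poly (fun r : R => (r%:C)%C) (char_poly J)) z.

Definition lin_stable {R : realType} (n : nat) (J : 'M[R]_n) : Prop :=
  forall z : R[i], eigenvalues_of J z -> z < 0.

Definition lin_unstable {R : realType} (n : nat) (J : 'M[R]_n) : Prop :=
  exists z : R[i], eigenvalues_of J z /\ 0 < z.

(* Main.v *)
Require Import Defs.
From HB Require Import structures.
From mathcomp Require Import all_boot all_order all_algebra.
From mathcomp Require Import all_classical all_reals all_analysis.
From mathcomp Require Import complex ring lra.
Import Order.TTheory GRing.Theory Num.Theory.
Local Open Scope ring_scope.

Lemma sum_delta (K : pzRingType) (m a : nat) (F : nat -> K) : (a < m)%N ->
  \sum_(k < m) (a == k :> nat)%:R * F k = F a.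
Proof.
move=> Ha; rewrite (bigD1 (Ordinal Ha)) //= eqxx mul1r big1 ?addr0 // => k Hk.
have -> : (a == k :> nat) = false.
  by apply/negbTE; move: Hk; apply: contra => /eqP e; apply/eqP/val_inj.
by rewrite mul0r.
Qed.

Section LA.
Variable R : realType.
Local Notation C := (R[i]).

Definition Lm (n : nat) : 'M[R]_n := \matrix_(i < n, j < n)
  ((i == j.+1 :> nat)%:R + (i.+1 == j :> nat)%:R - 2 * (i == j :> nat)%:R).

Definition Dc (n : nat) : 'M[C]_(n, n.+1) := \matrix_(i < n, k < n.+1)
  ((i == k :> nat)%:R - (i.+1 == k :> nat)%:R).

Definition Ec (n : nat) : 'M[C]_(n.+1, n) := \matrix_(k < n.+1, j < n) ((k <= j)%N)%:R.

Lemma DE n : Dc n *m Ec n = 1%:M.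
Proof.
apply/matrixP => i j; rewrite !mxE.
under eq_bigr => k _ do rewrite !mxE mulrBl.
rewrite sumrB (@sum_delta _ _ _ (fun k => ((k <= j)%N)%:R : C)); last by apply: (ltn_trans (ltn_ord i)).
rewrite (@sum_delta _ _ _ (fun k => ((k <= j)%N)%:R : C)); last by rewrite ltnS.
rewrite -val_eqE /=.
by case: (ltngtP i j) => H /=; rewrite ?subrr ?subr0.
Qed.

Lemma DDt n : map_mx (real_complex R) (Lm n) = - (Dc n *m (Dc n)^T).
Proof.
apply/matrixP => i j; rewrite !mxE.
under eq_bigr => k _ do rewrite !mxE mulrBl.
rewrite sumrB (@sum_delta _ _ _ (fun k => ((j == k :> nat)%:R - (j.+1 == k :> nat)%:R) : C)); last by apply: (ltn_trans (ltn_ord i)).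
rewrite (@sum_delta _ _ _ (fun k => ((j == k :> nat)%:R - (j.+1 == k :> nat)%:R) : C)); last by rewrite ltnS.
rewrite rmorphB rmorphD rmorphM /= !rmorph_nat eqSS.
rewrite [(j == i :> nat)]eq_sym [(j.+1 == i :> nat)]eq_sym [(j == i.+1 :> nat)]eq_sym.
ring.
Qed.
End LA.
Section Eig.
Variable R : realType.
Local Notation C := (R[i]).

Lemma map_conj_D n : map_mx (@conjc R) (Dc R n) = Dc R n.
Proof. by apply/matrixP => i k; rewrite !mxE rmorphB /= !conjc_nat. Qed.

Lemma sum_norm_gt0 n (v : 'rV[C]_n) : v != 0 -> 0 < \sum_(k < n) `|v 0 k| ^+ 2.
Proof.
move=> vn0.
have [k Hk] : exists k, v 0 k != 0.
  apply/existsP; move: vn0; apply: contraR; rewrite negb_exists => /forallP H.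
  apply/eqP/rowP => k; rewrite mxE; exact/eqP/negbNE/H.
rewrite (bigD1 k) //= ltr_wpDr ?sumr_ge0 //.
by rewrite exprn_gt0 // normr_gt0.
Qed.

Lemma eig_form n (a : R) (z : C) : eigenvalues_of (a *: Lm R n) z ->
  exists2 q : C, 0 < q & z = - (a%:C)%C * q.
Proof.
rewrite /eigenvalues_of.
have -> : (fun r : R => (r%:C)%C) = real_complex R by [].
rewrite map_char_poly -eigenvalue_root_char => /eigenvalueP [v Hv vn0].
have HJ : map_mx (real_complex R) (a *: Lm R n) = - ((a%:C)%C *: (Dc R n *m (Dc R n)^T)).
  by rewrite -scalerN -DDt; apply/matrixP => i j; rewrite !mxE rmorphM.
rewrite HJ in Hv.
set w := v *m Dc R n.
have wn0 : w != 0.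
  apply: contraNneq vn0 => w0.
  by rewrite -[v]mulmx1 -(DE R n) mulmxA -/w w0 mul0mx.
have E1 : (v *m - ((a%:C)%C *: (Dc R n *m (Dc R n)^T))) *m (map_mx (@conjc R) v)^T
   = - ((a%:C)%C *: (w *m (map_mx (@conjc R) w)^T)).
  rewrite mulmxN mulNmx -scalemxAr -scalemxAl; congr (- (_ *: _)).
  rewrite /w map_mxM map_conj_D trmx_mul !mulmxA; done.
rewrite Hv -scalemxAl in E1.
clearbody w.
have := congr1 (fun M : 'M[C]_1 => M 0 0) E1 => /=.
rewrite !mxE.
under eq_bigr => k _ do rewrite !mxE -sqr_normc.
under [X in _ = - (_ * X)]eq_bigr => k _ do rewrite !mxE -sqr_normc.
move=> E2.
have Pv := @sum_norm_gt0 _ _ vn0.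
have Pw := @sum_norm_gt0 _ _ wn0.
exists ((\sum_(k < n.+1) `|w 0 k| ^+ 2) / (\sum_(k < n) `|v 0 k| ^+ 2)).
  by rewrite divr_gt0.
apply: (mulIf (lt0r_neq0 Pv)); rewrite E2 -mulrA divfK ?mulNr //.
exact: lt0r_neq0.
Qed.

Lemma eig_exists n (J : 'M[R]_n) : (0 < n)%N -> exists z : C, eigenvalues_of J z.
Proof.
move=> n0.
have : size (map_poly (real_complex R) (char_poly J)) != 1%N.
  by rewrite size_map_poly size_char_poly; case: n n0 J.
move/closed_rootP => [z Hz]; by exists z.
Qed.
End Eig.
Set Implicit Arguments. Unset Strict Implicit.
Local Open Scope ring_scope.
Section S.
Variable R : realType.
Implicit Types f h : R -> R.
Lemma dD f h (x a b : R) : is_derive x 1 f a -> is_derive x 1 h b ->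
  is_derive x 1 (fun t => f t + h t) (a + b).
Proof. move=> H1 H2; exact: is_deriveD. Qed.
Lemma dB f h (x a b : R) : is_derive x 1 f a -> is_derive x 1 h b ->
  is_derive x 1 (fun t => f t - h t) (a - b).
Proof. move=> H1 H2; exact: is_deriveB. Qed.
Lemma dM f h (x a b : R) : is_derive x 1 f a -> is_derive x 1 h b ->
  is_derive x 1 (fun t => f t * h t) (f x * b + h x * a).
Proof. move=> H1 H2; exact: is_deriveM. Qed.
Lemma dC (c x : R) : is_derive x 1 (fun t => c) 0.
Proof. exact: is_derive_cst. Qed.
Lemma dI (x : R) : is_derive x 1 (fun t => t) 1.
Proof. exact: is_derive_id. Qed.
Lemma dV f (x a : R) : f x != 0 -> is_derive x 1 f a -> is_derive x 1 (fun t => (f t)^-1) (- (f x) ^- 2 * a).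
Proof. move=> H1 H2; exact: is_deriveV. Qed.
Lemma dV' f (x a : R) : is_derive x 1 f a -> f x != 0 -> is_derive x 1 (fun t => (f t)^-1) (- (f x) ^- 2 * a).
Proof. by move=> H1 H2; apply: dV. Qed.
Lemma dE f (x a : R) : is_derive x 1 f a -> is_derive x 1 (fun t => expR (f t)) (expR (f x) * a).
Proof. move=> H; exact: (@is_derive1_comp R expR f x _ _ (is_derive_expR _) H). Qed.
Lemma dEq f (x a b : R) : is_derive x 1 f a -> a = b -> is_derive x 1 f b.
Proof. by move=> ? <-. Qed.
Lemma dval f (x a : R) : is_derive x 1 f a -> derive1 f x = a.
Proof. by move=> H; rewrite derive1E derive_val. Qed.
Lemma dlin (x c k : R) : is_derive x 1 (fun t => c + k * t) k.
Proof.
have H := (dD (dC c x) (dM (dC k x) (dI x))).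
apply: (dEq H).
by ring.
Qed.

Variables g d : R.

Lemma dW p q (x kp kq : R) : is_derive x 1 p kp -> is_derive x 1 q kq ->
  is_derive x 1 (fun t => sbcm_w g d (p t) (q t))
   (- (1 + expR (g * (p x - q x) ^+ 2 - g * d)) ^- 2 *
     (expR (g * (p x - q x) ^+ 2 - g * d) * (g * (2 * (p x - q x) * (kp - kq))))).
Proof.
move=> Hp Hq.
have -> : (fun t => sbcm_w g d (p t) (q t)) =
   (fun t => (1 + expR (g * ((p t - q t) * (p t - q t)) - g * d))^-1).
  by apply/funext => t; rewrite /sbcm_w div1r expr2.
have H1 := dB Hp Hq.
have H2 := dM (dC g x) (dM H1 H1).
have H3 := dE (dB H2 (dC (g * d) x)).
have H4 := dD (dC 1 x) H3.
have Hn : (1 + expR (g * ((p x - q x) * (p x - q x)) - g * d)) != 0.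
  by rewrite gt_eqF // ltr_pwDr // expR_gt0.
have H5 := dV' H4 Hn.
apply: (dEq H5).
rewrite expr2; ring.
Qed.

Definition acoef : R := 2^-1 - g * expR (g - g * d) / (1 + expR (g - g * d)).

Lemma dG (xP0 xL0 xR0 kP kL kR : R) : xL0 - xP0 = -1 -> xR0 - xP0 = 1 ->
  derive1 (fun t =>
    (sbcm_w g d (xP0 + kP * t) (xL0 + kL * t) * ((xL0 + kL * t) - (xP0 + kP * t)) +
     sbcm_w g d (xP0 + kP * t) (xR0 + kR * t) * ((xR0 + kR * t) - (xP0 + kP * t))) /
    (sbcm_w g d (xP0 + kP * t) (xL0 + kL * t) + sbcm_w g d (xP0 + kP * t) (xR0 + kR * t))) 0
  = acoef * (kL + kR - 2 * kP).
Proof.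
move=> HL HR.
have HP := dlin 0 xP0 kP; have HL' := dlin 0 xL0 kL; have HR' := dlin 0 xR0 kR.
have WL := dW HP HL'; have WR := dW HP HR'.
have DN := dD (dM WL (dB HL' HP)) (dM WR (dB HR' HP)).
have DD := dD WL WR.
have Dn0 : sbcm_w g d (xP0 + kP * 0) (xL0 + kL * 0) + sbcm_w g d (xP0 + kP * 0) (xR0 + kR * 0) != 0.
  by rewrite gt_eqF // addr_gt0 // /sbcm_w divr_gt0 // ltr_pwDr // expR_gt0.
have DQ := dM DN (dV' DD Dn0).
apply: dval; apply: (dEq DQ).
rewrite /= /sbcm_w !mulr0 !addr0.
have -> : xL0 = xP0 - 1 by lra.
have -> : xR0 = xP0 + 1 by lra.
have -> : xP0 - (xP0 - 1) = 1 by ring.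
have -> : xP0 - (xP0 + 1) = -1 by ring.
rewrite sqrrN expr1n mulr1.
rewrite /acoef.
set e := expR (g - g * d).
have e0 : 0 < e by apply: expR_gt0.
have e1 : 1 + e != 0 by rewrite gt_eqF // ltr_pwDr.
field.
by rewrite e1 /=.
Qed.
End S.

Section Link.
Variable R : realType.

Lemma pers_val n (i : 'I_n) : (pers i : nat) = i.+1.
Proof. by []. Qed.

Lemma sum_adj n (i : 'I_n) (F : 'I_n.+2 -> R) :
  \sum_(k < n.+2) (if path_adj (pers i) k then F k else 0) = F (inord i) + F (inord i.+2).
Proof.
have h1 : (i < n.+2)%N by apply: (ltn_trans (ltn_ord i)); apply: ltnW.
have h2 : (i.+2 < n.+2)%N by rewrite !ltnS.
rewrite (bigD1 (inord i)) /=; last by rewrite /path_adj ?pers_val ?inordK // ?eqxx ?orbT.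
rewrite /path_adj ?pers_val ?inordK // ?eqxx ?orbT /=.
rewrite (bigD1 (inord i.+2)) /=; last first.
  by rewrite -val_eqE /= !inordK // gtn_eqF // ltnS leqnSn.
rewrite ?inordK // eqxx /=.
rewrite big1 ?addr0 // => k /andP [Hk1 Hk2].
case: ifP => // /orP [/eqP e | /eqP e]; exfalso.
- by move/negP: Hk2; apply; apply/eqP/val_inj; rewrite /= inordK.
- by move/negP: Hk1; apply; apply/eqP/val_inj; rewrite /= inordK //; case: e.
Qed.

Lemma f_closed n (g d : R) (x : 'I_n.+2 -> R) (i : 'I_n) :
  sbcm_f (@path_adj n) g d x (pers i) =
  (sbcm_w g d (x (pers i)) (x (inord i)) * (x (inord i) - x (pers i)) +
   sbcm_w g d (x (pers i)) (x (inord i.+2)) * (x (inord i.+2) - x (pers i))) /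
  (sbcm_w g d (x (pers i)) (x (inord i)) + sbcm_w g d (x (pers i)) (x (inord i.+2))).
Proof.
rewrite /sbcm_f.
have eqn : forall k : 'I_n.+2, (if path_adj (pers i) k then sbcm_w g d (x (pers i)) (x k) else 0) * (x k - x (pers i))
  = if path_adj (pers i) k then sbcm_w g d (x (pers i)) (x k) * (x k - x (pers i)) else 0.
  by move=> k; case: ifP; rewrite ?mul0r.
rewrite (eq_bigr _ (fun k _ => eqn k)).
by rewrite (sum_adj i (fun k => sbcm_w g d (x (pers i)) (x k) * (x k - x (pers i))))
  (sum_adj i (fun k => sbcm_w g d (x (pers i)) (x k))).
Qed.

Lemma jac_eq n (g d : R) : jacP g d (@harmonic_state R n) = acoef g d *: Lm R n.
Proof.
apply/matrixP => i j; rewrite !mxE.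
have h1 : (i < n.+2)%N by apply: (ltn_trans (ltn_ord i)); apply: ltnW.
have h2 : (i.+2 < n.+2)%N by rewrite !ltnS.
set xb := @harmonic_state R n.
have -> : (fun t : R => sbcm_f (@path_adj n) g d
      (fun k => xb k + (if k == pers j then t else 0)) (pers i)) =
  (fun t =>
    (sbcm_w g d (xb (pers i) + (pers i == pers j)%:R * t) (xb (inord i) + (inord i == pers j)%:R * t) *
       ((xb (inord i) + (inord i == pers j)%:R * t) - (xb (pers i) + (pers i == pers j)%:R * t)) +
     sbcm_w g d (xb (pers i) + (pers i == pers j)%:R * t) (xb (inord i.+2) + (inord i.+2 == pers j)%:R * t) *
       ((xb (inord i.+2) + (inord i.+2 == pers j)%:R * t) - (xb (pers i) + (pers i == pers j)%:R * t))) /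
    (sbcm_w g d (xb (pers i) + (pers i == pers j)%:R * t) (xb (inord i) + (inord i == pers j)%:R * t) +
     sbcm_w g d (xb (pers i) + (pers i == pers j)%:R * t) (xb (inord i.+2) + (inord i.+2 == pers j)%:R * t))).
  apply/funext => t; rewrite f_closed.
  have e : forall k : 'I_n.+2, (if k == pers j then t else 0) = (k == pers j)%:R * t.
    by move=> k; case: (k == pers j); rewrite ?mul1r ?mul0r.
  by rewrite !e.
rewrite dG; last first.
- rewrite /xb /harmonic_state pers_val inordK // !mulrS; lra.
- rewrite /xb /harmonic_state pers_val inordK // !mulrS; lra.
congr (_ * _).
have -> : (inord i == pers j) = (i == j.+1 :> nat) by rewrite -val_eqE /= inordK.
have -> : (inord i.+2 == pers j) = (i.+1 == j :> nat) by rewrite -val_eqE /= inordK.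
have -> : (pers i == pers j) = (i == j :> nat) by rewrite -val_eqE.
by [].
Qed.
End Link.
Import numFieldNormedType.Exports.
Local Open Scope classical_set_scope.
Local Open Scope ring_scope.

Section An.
Variable R : realType.
Definition hh (d x : R) : R := (2 * x - 1) * expR (x - x * d).

Lemma hh_cont d : continuous (hh d : R -> R).
Proof.
move=> x.
have Hx := dM (dB (dM (dC 2 x) (dI x)) (dC 1 x)) (dE (dB (dI x) (dM (dI x) (dC d x)))).
have H : derivable (hh d) x 1 by case: Hx.
by apply/differentiable_continuous/derivable1_diffP.
Qed.

Lemma hh_le0 d x : x <= 2^-1 -> hh d x <= 0.
Proof.
move=> hx; rewrite /hh mulr_le0_ge0 ?expR_ge0 //; lra.
Qed.

Lemma hh_inc1 d s t : d <= 1 -> 2^-1 <= s -> s < t -> hh d s < hh d t.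
Proof.
move=> d1 hs st; rewrite /hh.
have e1 : expR (s - s * d) <= expR (t - t * d) by rewrite ler_expR; nra.
have e0 := expR_gt0 (s - s * d).
apply: (le_lt_trans (y := (2 * s - 1) * expR (t - t * d))).
  by apply: ler_wpM2l => //; lra.
by rewrite ltr_pM2r ?expR_gt0 //; lra.
Qed.

Lemma hh_inc d s t : 1 < d -> 2^-1 <= s -> s < t -> t <= 2^-1 + (d - 1)^-1 -> hh d s < hh d t.
Proof.
move=> d1 hs st tm; rewrite /hh.
set c := d - 1.
have c0 : 0 < c by rewrite /c; lra.
have -> : expR (t - t * d) = expR (s - s * d) * expR (- (c * (t - s))).
  by rewrite -expRD /c; congr expR; ring.
have hexp : 1 - c * (t - s) < expR (- (c * (t - s))).
  have := @expR_gt1Dx R (- (c * (t - s))); rewrite oppr_eq0 mulf_eq0 negb_or gt_eqF // subr_eq0 gt_eqF //=.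
  by move=> /(_ isT); rewrite addrC.
have ct : c * (2 * t - 1) <= 2.
  have : 2 * t - 1 <= 2 / c by move: tm; rewrite mulrC; lra.
  by rewrite ler_pdivlMr // mulrC.
have key : 2 * s - 1 <= (2 * t - 1) * (1 - c * (t - s)) by nra.
have e0 := expR_gt0 (s - s * d).
rewrite [X in _ < X]mulrCA [X in X < _]mulrC ltr_pM2l //.
apply: (le_lt_trans key); rewrite ltr_pM2l //; lra.
Qed.

Lemma hh_dec d s t : 1 < d -> 2^-1 + (d - 1)^-1 <= s -> s < t -> hh d t < hh d s.
Proof.
move=> d1 hs st; rewrite /hh.
set c := d - 1.
have c0 : 0 < c by rewrite /c; lra.
have -> : expR (t - t * d) = expR (s - s * d) * expR (- (c * (t - s))).
  by rewrite -expRD /c; congr expR; ring.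
have hexp : 1 + c * (t - s) < expR (c * (t - s)).
  have := @expR_gt1Dx R (c * (t - s)); rewrite mulf_eq0 negb_or gt_eqF // subr_eq0 gt_eqF //=.
  by move=> /(_ isT).
have ci : 0 < c^-1 by rewrite invr_gt0.
have cs : 2 <= c * (2 * s - 1).
  have : 2 / c <= 2 * s - 1 by move: hs; rewrite mulrC; lra.
  by rewrite ler_pdivrMr // mulrC.
have e0 := expR_gt0 (s - s * d).
have e1 := expR_gt0 (- (c * (t - s))).
have EE : expR (- (c * (t - s))) * expR (c * (t - s)) = 1 by rewrite -expRD addNr expR0.
rewrite [X in X < _]mulrCA [X in _ < X]mulrC ltr_pM2l //.
have s1 : 0 < 2 * s - 1 by nra.
have k1 : 2 * t - 1 <= (2 * s - 1) * (1 + c * (t - s)) by nra.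
have k2 : (2 * s - 1) * (1 + c * (t - s)) < (2 * s - 1) * expR (c * (t - s)) by rewrite ltr_pM2l.
have k3 : (2 * t - 1) * expR (- (c * (t - s))) < (2 * s - 1) * expR (c * (t - s)) * expR (- (c * (t - s))).
  by rewrite ltr_pM2r //; apply: le_lt_trans k2.
by rewrite -mulrA (mulrC (expR (c * (t - s)))) EE mulr1 in k3.
Qed.
End An.

Section Stab.
Variable R : realType.

Lemma ltC0 (a : R) : (0 < (a%:C)%C) = (0 < a).
Proof. by rewrite ltcE /= eqxx. Qed.

Lemma ltC0' (a : R) : ((a%:C)%C < 0) = (a < 0).
Proof. by rewrite ltcE /= eqxx. Qed.

Lemma stab_pos n (g d : R) : 0 < acoef g d -> lin_stable (jacP g d (@harmonic_state R n)).
Proof.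
move=> a0 z; rewrite jac_eq => /eig_form [q q0 ->].
by rewrite pmulr_llt0 // oppr_lt0 ltC0.
Qed.

Lemma unst_neg n (g d : R) : lin_unstable (jacP g d (@harmonic_state R n)) -> acoef g d < 0.
Proof.
move=> [z []]; rewrite jac_eq => /eig_form [q q0 ->].
by rewrite pmulr_lgt0 // oppr_gt0 ltC0'.
Qed.

Lemma neg_unst n (g d : R) : (0 < n)%N -> acoef g d < 0 -> lin_unstable (jacP g d (@harmonic_state R n)).
Proof.
move=> n0 a0; have [z Hz] := @eig_exists R n (jacP g d (@harmonic_state R n)) n0.
exists z; split => //; move: Hz; rewrite jac_eq => /eig_form [q q0 ->].
by rewrite pmulr_lgt0 // oppr_gt0 ltC0'.
Qed.
End Stab.

Section Main.
Variable R : realType.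

Lemma acoefE (g d : R) : acoef g d = (1 - hh d g) / (2 * (1 + expR (g - g * d))).
Proof.
rewrite /acoef /hh.
have e0 := expR_gt0 (g - g * d).
have e1 : 1 + expR (g - g * d) != 0 by rewrite gt_eqF // ltr_pwDr.
by field; rewrite e1.
Qed.

Lemma acoef_pos (g d : R) : hh d g < 1 -> 0 < acoef g d.
Proof.
move=> H; rewrite acoefE divr_gt0 //; try lra.
all: try by rewrite mulr_gt0 // ltr_pwDr // expR_gt0.
Qed.

Lemma acoef_neg (g d : R) : 1 < hh d g -> acoef g d < 0.
Proof.
move=> H; rewrite acoefE pmulr_llt0; try lra.
all: try by rewrite invr_gt0 mulr_gt0 // ltr_pwDr // expR_gt0.
Qed.

Lemma acoef_neg_inv (g d : R) : acoef g d < 0 -> 1 < hh d g.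
Proof.
rewrite acoefE pmulr_llt0; try lra.
all: try by rewrite invr_gt0 mulr_gt0 // ltr_pwDr // expR_gt0.
Qed.

Lemma yrel (y : R) : y < 0 -> expR (y - 2) = y ^+ 2 / 4 -> expR (y / 2 - 1) = - y / 2.
Proof.
move=> y0 hy.
set u := expR (y / 2 - 1).
have u0 : 0 < u := expR_gt0 _.
have uu : u * u = y ^+ 2 / 4 by rewrite -hy /u -expRD; congr expR; field.
have : (u - - y / 2) * (u + - y / 2) = 0.
  have -> : (u - - y / 2) * (u + - y / 2) = u * u - y ^+ 2 / 4 by field.
  by rewrite uu subrr.
move/eqP; rewrite mulf_eq0 => /orP [/eqP H | /eqP H]; first by lra.
lra.
Qed.

Lemma hh_peak (d : R) : 1 < d ->
  hh d (2^-1 + (d - 1)^-1) = 2 / (d - 1) * expR (- ((d - 1) / 2) - 1).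
Proof.
move=> d1; have c0 : d - 1 != 0 by rewrite subr_eq0 gt_eqF.
rewrite /hh; congr (_ * _); first by field.
by congr expR; field.
Qed.

Lemma peak_gt (d y : R) : y < 0 -> expR (y - 2) = y ^+ 2 / 4 -> 1 < d -> d < 1 - y ->
  1 < hh d (2^-1 + (d - 1)^-1).
Proof.
move=> y0 hy d1 dy; rewrite hh_peak //.
have c0 : 0 < d - 1 by lra.
have E : - y / 2 < expR (- ((d - 1) / 2) - 1).
  by rewrite -(yrel y0 hy) ltr_expR; lra.
have E2 : (d - 1) / 2 < expR (- ((d - 1) / 2) - 1) by lra.
rewrite -(ltr_pM2l (x := (d - 1) / 2)) ?divr_gt0 // mulr1 mulrA.
have -> : (d - 1) / 2 * (2 / (d - 1)) = 1 by field; rewrite gt_eqF.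
by rewrite mul1r.
Qed.

Lemma peak_lt (d y : R) : y < 0 -> expR (y - 2) = y ^+ 2 / 4 -> 1 - y < d ->
  hh d (2^-1 + (d - 1)^-1) < 1.
Proof.
move=> y0 hy dy; have d1 : 1 < d by lra.
rewrite hh_peak //.
have c0 : 0 < d - 1 by lra.
have E : expR (- ((d - 1) / 2) - 1) < - y / 2.
  by rewrite -(yrel y0 hy) ltr_expR; lra.
have E2 : expR (- ((d - 1) / 2) - 1) < (d - 1) / 2 by lra.
rewrite -(ltr_pM2l (x := (d - 1) / 2)) ?divr_gt0 // mulr1 mulrA.
have -> : (d - 1) / 2 * (2 / (d - 1)) = 1 by field; rewrite gt_eqF.
by rewrite mul1r.
Qed.

Lemma hh_large (d : R) : 1 < d -> exists G, 2^-1 + (d - 1)^-1 <= G /\ hh d G < 1.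
Proof.
move=> d1; set c := d - 1; have c0 : 0 < c by rewrite /c; lra.
have ci : 0 < c^-1 by rewrite invr_gt0.
exists (2^-1 + c^-1 + 8 / c ^+ 2); split.
  by rewrite lerDl divr_ge0 // ltW // exprn_gt0.
set G := 2^-1 + c^-1 + 8 / c ^+ 2.
have G8 : 8 / c ^+ 2 <= G by rewrite /G; lra.
have h8 : 0 < 8 / c ^+ 2 by rewrite divr_gt0 // exprn_gt0.
have G0 : 0 < G by rewrite /G; lra.
have cG : 8 <= c ^+ 2 * G.
  by move: G8; rewrite ler_pdivrMr ?exprn_gt0 // mulrC.
set E := expR (c * G / 2).
have E1 : 1 + c * G / 2 <= E by apply: expR_ge1Dx.
have EE : expR (G - G * d) * (E * E) = 1.
  have z : G - G * d + (c * G / 2 + c * G / 2) = 0 by rewrite /c; field.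
  by rewrite /E -!expRD z expR0.
have e0 := expR_gt0 (G - G * d).
have big : 2 * G - 1 < E * E.
  have : (1 + c * G / 2) ^+ 2 <= E * E.
    have cG0 : 0 < c * G by rewrite mulr_gt0.
    by rewrite expr2; apply: ler_pM => //; lra.
  have hp : 0 <= G * (c ^+ 2 * G - 8) by rewrite mulr_ge0 // ?subr_ge0 // ltW.
  have : 2 * G <= c ^+ 2 * G * G / 4 by nra.
  move=> h1 h2; rewrite expr2 in h2 cG h1; nra.
rewrite /hh -[X in _ < X]EE mulrC ltr_pM2l //.
Qed.
End Main.

Unset Implicit Arguments.
Lemma ivt_up (R : realType) (d a b : R) : a <= b -> hh d a <= 1 -> 1 <= hh d b ->
  exists2 c, a <= c <= b & hh d c = 1.
Proof.
move=> ab ha hb.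
have H : Num.min (hh d a) (hh d b) <= 1 <= Num.max (hh d a) (hh d b).
  by rewrite ge_min le_max ha hb ?orbT.
have [c cI hc] := @IVT R (hh d) a b 1 ab (continuous_subspaceT (@hh_cont R d)) H.
by exists c => //; rewrite in_itv /= in cI.
Qed.

Lemma ivt_down (R : realType) (d a b : R) : a <= b -> 1 <= hh d a -> hh d b <= 1 ->
  exists2 c, a <= c <= b & hh d c = 1.
Proof.
move=> ab ha hb.
have H : Num.min (hh d a) (hh d b) <= 1 <= Num.max (hh d a) (hh d b).
  by rewrite ge_min le_max ha hb ?orbT.
have [c cI hc] := @IVT R (hh d) a b 1 ab (continuous_subspaceT (@hh_cont R d)) H.
by exists c => //; rewrite in_itv /= in cI.
Qed.

Lemma hh_half (R : realType) (d : R) : hh d 2^-1 = 0.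
Proof. by rewrite /hh (_ : 2 * 2^-1 - 1 = 0) ?mul0r //; field. Qed.

Theorem theorem5 (R : realType) (n : nat) (y : R) :
  (0 < n)%N ->
  y < 0 -> expR (y - 2) = y ^+ 2 / 4 ->
  (* (1) *)
  (forall delta : R, 0 <= delta <= 1 ->
     exists gc : R, 0 < gc /\
       (forall gamma : R, 0 <= gamma < gc ->
          lin_stable (jacP gamma delta (@harmonic_state R n))) /\
       (forall gamma : R, gc < gamma ->
          lin_unstable (jacP gamma delta (@harmonic_state R n))) /\
       (delta = 1 -> gc = 1)) /\
  (* (2) *)
  (forall delta : R, 1 < delta < 1 - y ->
     exists g1 g2 : R, 0 < g1 /\ 0 < g2 /\
       (forall gamma : R, 0 <= gamma ->
          (lin_unstable (jacP gamma delta (@harmonic_state R n)) <-> g1 < gamma < g2)) /\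
       (forall gamma : R, 0 <= gamma -> (gamma < g1 \/ g2 < gamma) ->
          lin_stable (jacP gamma delta (@harmonic_state R n)))) /\
  (* (3) *)
  (forall delta : R, 1 - y < delta ->
     forall gamma : R, 0 < gamma ->
       lin_stable (jacP gamma delta (@harmonic_state R n))).
Proof.
move=> n0 y0 hy; split; [|split].
- move=> d /andP [d0 d1].
  have h1 : 1 <= hh d 1.
    rewrite /hh mul1r (_ : 2 * 1 - 1 = 1); last by lra.
    by rewrite mul1r; apply: le_trans (expR_ge1Dx _); lra.
  have hz : hh d 2^-1 <= 1 by rewrite hh_half.
  have h21 : (2^-1 : R) <= 1 by lra.
  have [gc /andP [ga gb] hgc] := @ivt_up R d 2^-1 1 h21 hz h1.
  exists gc; split; first by lra.
  split.
    move=> g /andP [g0 g1]; apply: stab_pos; apply: acoef_pos.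
    case: (lerP g 2^-1) => hg; first by apply: le_lt_trans (hh_le0 d hg) _.
    by rewrite -hgc; apply: hh_inc1 => //; lra.
  split.
    move=> g hg; apply: neg_unst n0 _; apply: acoef_neg.
    by rewrite -hgc; apply: hh_inc1.
  move=> d1'; move: hgc; rewrite /hh d1' mulr1 subrr expR0 mulr1; lra.
- move=> d /andP [d1 dy].
  set m := 2^-1 + (d - 1)^-1.
  have ci : 0 < (d - 1)^-1 by rewrite invr_gt0; lra.
  have hm : 1 < hh d m := peak_gt y0 hy d1 dy.
  have [G [mG hG]] := hh_large d1.
  have hz : hh d 2^-1 <= 1 by rewrite hh_half.
  have h2m : 2^-1 <= m by rewrite /m; lra.
  have [g1 /andP [g1a g1b] hg1] := @ivt_up R d 2^-1 m h2m hz (ltW hm).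
  have [g2 /andP [g2a g2b] hg2] := @ivt_down R d m G mG (ltW hm) (ltW hG).
  have g1m : g1 < m by rewrite lt_neqAle g1b andbT; apply/eqP => e; move: hm; rewrite -e hg1 ltxx.
  have g2m : m < g2 by rewrite lt_neqAle g2a andbT; apply/eqP => e; move: hm; rewrite e hg2 ltxx.
  have HLa : forall g, 2^-1 <= g -> g < g1 -> hh d g < 1.
    by move=> g ga gb; rewrite -hg1; apply: hh_inc => //; lra.
  have HLb : forall g, g1 < g -> g <= m -> 1 < hh d g.
    by move=> g ga gb; rewrite -hg1; apply: hh_inc => //; lra.
  have HRa : forall g, m <= g -> g < g2 -> 1 < hh d g.
    by move=> g ga gb; rewrite -hg2; apply: hh_dec.
  have HRb : forall g, g2 < g -> hh d g < 1.
    by move=> g ga; rewrite -hg2; apply: hh_dec.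
  exists g1, g2; split; first by lra.
  split; first by lra.
  split.
    move=> g g0; split.
      move/unst_neg/acoef_neg_inv => H.
      case: (lerP g 2^-1) => hg; first by have := hh_le0 d hg; lra.
      case: (lerP g m) => hgm.
        case: (ltrgtP g g1) => e.
        + by have := HLa g (ltW hg) e; lra.
        + by apply/andP; split => //; lra.
        + by move: H; rewrite e hg1 ltxx.
      case: (ltrgtP g g2) => e.
      + by apply/andP; split => //; lra.
      + by have := HRb g e; lra.
      + by move: H; rewrite e hg2 ltxx.
    move=> /andP [ga gb]; apply: neg_unst n0 _; apply: acoef_neg.
    case: (lerP g m) => hgm; first by apply: HLb.
    by apply: HRa => //; apply: ltW.
  move=> g g0 [ga | gb]; apply: stab_pos; apply: acoef_pos.
    case: (lerP g 2^-1) => hg; first by apply: le_lt_trans (hh_le0 d hg) _.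
    by apply: HLa => //; apply: ltW.
  by apply: HRb.
- move=> d dy g g0; apply: stab_pos; apply: acoef_pos.
  have d1 : 1 < d by lra.
  set m := 2^-1 + (d - 1)^-1.
  have ci : 0 < (d - 1)^-1 by rewrite invr_gt0; lra.
  have hm : hh d m < 1 := peak_lt y0 hy dy.
  case: (lerP g 2^-1) => hg; first by apply: le_lt_trans (hh_le0 d hg) _.
  case: (ltrgtP g m) => hgm.
  + by apply: lt_trans hm; apply: hh_inc => //; lra.
  + by apply: lt_trans hm; apply: hh_dec => //; lra.
  + by rewrite hgm.
Qed.
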